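(* Let $f\colon\mathbb{R}\to\mathbb{R}$ be locally Lipschitz continuous and let $\phi_\pm\in\mathbb{R}$ with $\phi_-<0<\phi_+$. Suppose $f(\phi_+)=f(\phi_-)$ and $f(z)-f(\phi_\pm)<0$ for all $z\in(\phi_-,\phi_+)$. Then for each $\kappa\in(f(0),f(\phi_\pm))$ there exists a constant $R>0$ such that for every $\delta\in(0,\kappa-f(0))$ there exist $\tilde f\in C^\infty(\mathbb{R})$ and $\psi_\pm\in(\phi_-,\phi_+)$ with $\psi_-<0<\psi_+$ such that: (i) $\tilde f(\phi_+)=\tilde f(\phi_-)$, $\tilde f'(\phi_\pm)\neq0$, and $\tilde f(z)-\tilde f(\phi_\pm)<0$ for all $z\in(\phi_-,\phi_+)$; (ii) $\tilde f(\psi_+)=\kappa=\tilde f(\psi_-)$, $\tilde f'(\psi_\pm)\neq0$, and $\tilde f(z)-\tilde f(\psi_\pm)<0$ for all $z\in(\psi_-,\psi_+)$; (iii) $|f(z)-\tilde f(z)|<\delta$ and $|\tilde f'(z)|<R$ for all $z\in[\phi_-,\phi_+]$. *)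

(* Defs.v *)
From Stdlib Require Import Reals.
From Coquelicot Require Export Coquelicot.
Open Scope R_scope.

Definition locally_lipschitz (f : R -> R) : Prop :=
  forall x : R, exists r : R, 0 < r /\ exists L : R,
    forall y z : R, Rabs (y - x) < r -> Rabs (z - x) < r ->
      Rabs (f y - f z) <= L * Rabs (y - z).

Definition smooth (f : R -> R) : Prop :=
  forall (n : nat) (x : R), ex_derive (Derive_n f n) x.

(* Main.v *)
Require Import Defs.
From Stdlib Require Import Reals.
From Coquelicot Require Import Coquelicot.
From Stdlib Require Import Lra Lia Psatz FunctionalExtensionality Classical.
Open Scope R_scope.

Fixpoint Bern (n : nat) (h : nat -> R) (u : R) : R :=
  match n with
  | O => h O
  | S m => (1 - u) * Bern m h u + u * Bern m (fun k => h (S k)) u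
  end.

Lemma Bern_S m h u : Bern (S m) h u = (1 - u) * Bern m h u + u * Bern m (fun k => h (S k)) u.
Proof. reflexivity. Qed.

Lemma Bern_ext n : forall h h' u, (forall k, (k <= n)%nat -> h k = h' k) -> Bern n h u = Bern n h' u.
Proof.
  induction n as [|n IH]; intros h h' u H; simpl.
  - apply H; lia.
  - rewrite (IH h h'), (IH (fun k => h (S k)) (fun k => h' (S k))); auto;
    intros k Hk; apply H; lia.
Qed.

Lemma Bern_plus n : forall h1 h2 u, Bern n (fun k => h1 k + h2 k) u = Bern n h1 u + Bern n h2 u.
Proof.
  induction n as [|n IH]; intros h1 h2 u; simpl; auto.
  rewrite IH, (IH (fun k => h1 (S k)) (fun k => h2 (S k))); ring.
Qed.

Lemma Bern_scal n : forall c h u, Bern n (fun k => c * h k) u = c * Bern n h u.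
Proof.
  induction n as [|n IH]; intros c h u; simpl; auto.
  rewrite IH, (IH c (fun k => h (S k))); ring.
Qed.

Lemma Bern_const n : forall c u, Bern n (fun _ => c) u = c.
Proof.
  induction n as [|n IH]; intros c u; simpl; auto.
  rewrite IH; ring.
Qed.

Lemma Bern_mono n : forall h h' u, 0 <= u <= 1 -> (forall k, (k <= n)%nat -> h k <= h' k) ->
  Bern n h u <= Bern n h' u.
Proof.
  induction n as [|n IH]; intros h h' u Hu H; simpl.
  - apply H; lia.
  - assert (A := IH h h' u Hu ltac:(intros k Hk; apply H; lia)).
    assert (B := IH (fun k => h (S k)) (fun k => h' (S k)) u Hu ltac:(intros k Hk; apply H; lia)).
    nra.
Qed.

Lemma Bern_0 n : forall h, Bern n h 0 = h O.
Proof.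
  induction n as [|n IH]; intros h; simpl; auto. rewrite !IH; ring.
Qed.

Lemma Bern_1 n : forall h, Bern n h 1 = h n.
Proof.
  induction n as [|n IH]; intros h; simpl; auto. rewrite !IH; ring.
Qed.

Lemma Bern_id n : forall u, Bern n (fun k => INR k) u = INR n * u.
Proof.
  induction n as [|n IH]; intros u.
  - simpl; ring.
  - rewrite Bern_S, IH.
    rewrite (Bern_ext n _ (fun k => INR k + 1)) by (intros; rewrite S_INR; ring).
    rewrite Bern_plus, Bern_const, IH, S_INR; ring.
Qed.

Lemma Bern_sq n : forall u, Bern n (fun k => INR k ^ 2) u = INR n * u * (1 - u) + (INR n * u) ^ 2.
Proof.
  induction n as [|n IH]; intros u.
  - simpl; ring.
  - rewrite Bern_S, IH.
    rewrite (Bern_ext n _ (fun k => INR k ^ 2 + (2 * INR k + 1))) by (intros; rewrite S_INR; ring).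
    rewrite Bern_plus, Bern_plus, Bern_scal, Bern_const, IH, Bern_id, S_INR; ring.
Qed.

Lemma Bern_var n u : Bern n (fun k => (INR k - INR n * u) ^ 2) u = INR n * u * (1 - u).
Proof.
  rewrite (Bern_ext n _ (fun k => INR k ^ 2 + ((-2 * INR n * u) * INR k + (INR n * u)^2))) by (intros; ring).
  rewrite Bern_plus, Bern_plus, Bern_scal, Bern_const, Bern_sq, Bern_id; ring.
Qed.

Lemma D_plus (f g : R -> R) x df dg : is_derive f x df -> is_derive g x dg -> is_derive (fun t => f t + g t) x (df + dg).
Proof. intros; now apply (is_derive_plus f g). Qed.
Lemma D_mult (f g : R -> R) x df dg : is_derive f x df -> is_derive g x dg -> is_derive (fun t => f t * g t) x (df * g x + f x * dg).
Proof. intros; now apply (is_derive_mult f g); [| |intros; apply Rmult_comm]. Qed.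
Lemma D_const (c : R) x : is_derive (fun _ => c) x 0.
Proof. apply (is_derive_const c x). Qed.
Lemma D_id x : is_derive (fun t : R => t) x 1.
Proof. apply (is_derive_id x). Qed.
Lemma D_comp (f g : R -> R) x df dg : is_derive f (g x) df -> is_derive g x dg -> is_derive (fun t => f (g t)) x (dg * df).
Proof. intros; now apply (is_derive_comp f g). Qed.

Lemma D_ext (f g : R -> R) x l : (forall t, f t = g t) -> is_derive f x l -> is_derive g x l.
Proof. intros; now apply (is_derive_ext f g). Qed.

Lemma is_derive_eq (f : R -> R) (x l l' : R) : is_derive f x l -> l = l' -> is_derive f x l'.
Proof. intros H ->; exact H. Qed.

Lemma D_lin (g : R -> R) x dg : is_derive g x dg -> is_derive (fun t => (1 - t) * g t) x (- g x + (1 - x) * dg).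
Proof.
  intros H. eapply is_derive_eq.
  - apply (D_mult (fun t => 1 - t) g).
    + apply (D_ext (fun t => 1 + (-1) * t)); [intros; ring|].
      apply (D_plus (fun _ => 1) (fun t => (-1) * t)). apply D_const.
      apply (D_ext (fun t => (fun _ => -1) t * (fun t => t) t)); [intros; reflexivity|].
      apply D_mult; [apply D_const | apply D_id].
    + exact H.
  - simpl; ring.
Qed.

Lemma D_lin2 (g : R -> R) x dg : is_derive g x dg -> is_derive (fun t => t * g t) x (g x + x * dg).
Proof.
  intros H. eapply is_derive_eq.
  - apply (D_mult (fun t => t) g); [apply D_id | exact H].
  - simpl; ring.
Qed.

Lemma Bern_deriv m : forall h u,
  is_derive (Bern (S m) h) u (INR (S m) * Bern m (fun k => h (S k) - h k) u).
Proof.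
  induction m as [|m IH]; intros h u.
  - apply D_ext with (f := fun u => (1 - u) * h O + u * h 1%nat).
    { intros; reflexivity. }
    eapply is_derive_eq.
    + apply (D_plus (fun u => (1 - u) * h O) (fun u => u * h 1%nat)).
      * apply (D_lin (fun _ => h O)); apply D_const.
      * apply (D_lin2 (fun _ => h 1%nat)); apply D_const.
    + simpl; ring.
  - apply D_ext with (f := fun u => (1 - u) * Bern (S m) h u + u * Bern (S m) (fun k => h (S k)) u).
    { intros; reflexivity. }
    eapply is_derive_eq.
    + apply (D_plus (fun u => (1 - u) * Bern (S m) h u) (fun u => u * Bern (S m) (fun k => h (S k)) u)).
      * apply (D_lin (Bern (S m) h)); apply IH.
      * apply (D_lin2 (Bern (S m) (fun k => h (S k)))); apply IH.
    + cbv beta.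
      assert (E : Bern (S m) (fun k => h (S k)) u - Bern (S m) h u = Bern (S m) (fun k => h (S k) - h k) u).
      { rewrite (Bern_ext (S m) (fun k => h (S k) - h k) (fun k => h (S k) + (-1) * h k)) by (intros; ring).
        rewrite Bern_plus, Bern_scal; ring. }
      pose proof (Bern_S m (fun k => h (S k) - h k) u) as E2. cbv beta in E2.
      transitivity (Bern (S m) (fun k => h (S k) - h k) u + INR (S m) * ((1 - u) * Bern m (fun k => h (S k) - h k) u + u * Bern m (fun k => h (S (S k)) - h (S k)) u)).
      * rewrite <- E; ring.
      * rewrite <- E2, (S_INR (S m)); ring.
Qed.

Inductive IsPoly : (R -> R) -> Prop :=
| P_const c : IsPoly (fun _ => c)
| P_id : IsPoly (fun x => x)
| P_add f g : IsPoly f -> IsPoly g -> IsPoly (fun x => f x + g x)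
| P_mul f g : IsPoly f -> IsPoly g -> IsPoly (fun x => f x * g x).

Lemma IsPoly_ext f g : IsPoly f -> (forall x, f x = g x) -> IsPoly g.
Proof.
  intros H E. replace g with f; auto. apply functional_extensionality; auto.
Qed.

Lemma IsPoly_derive f : IsPoly f -> forall x, is_derive f x (Derive f x) /\ IsPoly (Derive f).
Proof.
  induction 1 as [c | | f g Hf IHf Hg IHg | f g Hf IHf Hg IHg].
  - intros x; split.
    + rewrite Derive_const; apply D_const.
    + apply IsPoly_ext with (fun _ => 0); [constructor | intros; rewrite Derive_const; auto].
  - intros x; split.
    + replace (Derive (fun x => x) x) with 1 by (symmetry; apply (Derive_id x)); apply D_id.
    + apply IsPoly_ext with (fun _ => 1); [constructor | intros; symmetry; apply (Derive_id x0)].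
  - assert (E : forall x, Derive (fun x => f x + g x) x = Derive f x + Derive g x).
    { intros x; apply Derive_plus; eexists; apply IHf || apply IHg. }
    intros x; split.
    + rewrite E; apply D_plus; [apply IHf | apply IHg].
    + apply IsPoly_ext with (fun x => Derive f x + Derive g x); [constructor; [apply (IHf 0) | apply (IHg 0)] | intros; rewrite E; auto].
  - assert (E : forall x, Derive (fun x => f x * g x) x = Derive f x * g x + f x * Derive g x).
    { intros x; apply Derive_mult; eexists; apply IHf || apply IHg. }
    intros x; split.
    + rewrite E; apply D_mult; [apply IHf | apply IHg].
    + apply IsPoly_ext with (fun x => Derive f x * g x + f x * Derive g x);
        [repeat constructor; auto; [apply (IHf 0) | apply (IHg 0)] | intros; rewrite E; auto].
Qed.

Lemma IsPoly_smooth f : IsPoly f -> smooth f.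
Proof.
  intros Hf n. assert (H : IsPoly (Derive_n f n)).
  { induction n as [|n IH]; simpl.
    - apply IsPoly_ext with f; auto.
    - apply (IsPoly_derive _ IH 0). }
  intros x; eexists; apply (IsPoly_derive _ H x).
Qed.

Lemma Bern_poly n : forall h phi, IsPoly phi -> IsPoly (fun x => Bern n h (phi x)).
Proof.
  induction n as [|n IH]; intros h phi Hp; simpl.
  - constructor.
  - apply (P_add (fun x => (1 - phi x) * Bern n h (phi x)) (fun x => phi x * Bern n (fun k => h (S k)) (phi x))).
    + apply (P_mul (fun x => 1 - phi x)); [|apply IH; auto].
      apply IsPoly_ext with (fun x => 1 + (-1) * phi x); [|intros; ring].
      apply (P_add (fun _ => 1)); [constructor|apply (P_mul (fun _ => -1)); [constructor|auto]].
    + apply P_mul; auto.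
Qed.

Lemma lub_approx (E : R -> Prop) s y : is_lub E s -> y < s -> exists x, E x /\ y < x.
Proof.
  intros [Hub Hl] Hy. destruct (classic (exists x, E x /\ y < x)) as [H|H]; auto.
  exfalso. assert (s <= y); [|lra]. apply Hl. intros x Ex.
  destruct (Rle_or_lt x y); auto. exfalso; apply H; eauto.
Qed.

Lemma absd y z : y <= z -> Rabs (y - z) = z - y.
Proof. intros; rewrite Rabs_minus_sym, Rabs_pos_eq; lra. Qed.

Lemma lip_sym (f : R -> R) (P : R -> Prop) K :
  (forall y z, P y -> P z -> y <= z -> Rabs (f y - f z) <= K * (z - y)) ->
  forall y z, P y -> P z -> Rabs (f y - f z) <= K * Rabs (y - z).
Proof.
  intros H y z Py Pz. destruct (Rle_or_lt y z).
  - rewrite (absd y z) by lra; auto.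
  - rewrite (Rabs_minus_sym (f y)), (Rabs_minus_sym y), (absd z y) by lra; apply H; auto; lra.
Qed.

Lemma loclip_interval f a b : locally_lipschitz f -> a <= b ->
  exists L, 0 <= L /\ forall y z, a <= y <= b -> a <= z <= b -> Rabs (f y - f z) <= L * Rabs (y - z).
Proof.
  intros Hf Hab.
  set (E := fun x => a <= x <= b /\ exists L, 0 <= L /\ forall y z, a <= y <= x -> a <= z <= x ->
                  Rabs (f y - f z) <= L * Rabs (y - z)).
  assert (Ea : E a).
  { split; [lra|]. exists 0; split; [lra|]. intros y z Hy Hz.
    replace y with a by lra; replace z with a by lra. rewrite Rminus_diag, Rabs_R0; lra. }
  destruct (completeness E) as [s Hs].
  { exists b; intros x Ex; apply Ex. }
  { exists a; auto. }
  assert (Has : a <= s) by (apply Hs; auto).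
  assert (Hsb : s <= b) by (apply Hs; intros x Ex; apply Ex).
  destruct (Hf s) as [r [Hr [L1 HL1]]].
  destruct (lub_approx E s (s - r) Hs ltac:(lra)) as [x0 [[Hx0 [L0 [HL0 H0]]] Hx0s]].
  assert (Hx0s' : x0 <= s) by (apply Hs; split; [lra|]; exists L0; auto).
  set (L := Rmax L0 (Rmax L1 0)).
  assert (HLa : L0 <= L) by apply Rmax_l.
  assert (HLb : L1 <= L) by (eapply Rle_trans; [apply Rmax_l|apply Rmax_r]).
  assert (HLc : 0 <= L) by (eapply Rle_trans; [apply Rmax_r|apply Rmax_r]).
  assert (Key : forall x, a <= x <= b -> x < s + r -> E x).
  { intros x Hx Hxr. split; auto. exists L; split; auto.
    apply (lip_sym f (fun y => a <= y <= x)). intros y z Hy Hz Hyz.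
    destruct (Rle_or_lt z x0) as [Hz0|Hz0].
    - rewrite <- (absd y z) by lra. eapply Rle_trans; [apply H0; lra|].
      apply Rmult_le_compat_r; [apply Rabs_pos|auto].
    - destruct (Rle_or_lt y x0) as [Hy0|Hy0].
      + replace (f y - f z) with ((f y - f x0) + (f x0 - f z)) by ring.
        eapply Rle_trans; [apply Rabs_triang|].
        assert (A1 : Rabs (f y - f x0) <= L0 * (x0 - y)) by (rewrite <- (absd y x0) by lra; apply H0; lra).
        assert (A2 : Rabs (f x0 - f z) <= L1 * (z - x0)).
        { rewrite <- (absd x0 z) by lra. apply HL1; rewrite Rabs_lt_between'; lra. }
        assert (L0 * (x0 - y) <= L * (x0 - y)) by (apply Rmult_le_compat_r; lra).
        assert (L1 * (z - x0) <= L * (z - x0)) by (apply Rmult_le_compat_r; lra).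
        lra.
      + rewrite <- (absd y z) by lra. eapply Rle_trans; [apply HL1; rewrite Rabs_lt_between'; lra|].
        apply Rmult_le_compat_r; [apply Rabs_pos|auto]. }
  assert (Hsb' : s = b).
  { destruct (Rle_or_lt b s); [lra|].
    assert (E (Rmin (s + r/2) b)) as HE.
    { apply Key. split; [apply Rmin_glb; lra | apply Rmin_r]. 
      eapply Rle_lt_trans; [apply Rmin_l|lra]. }
    assert (Rmin (s + r/2) b <= s) by (apply Hs; auto).
    unfold Rmin in *; destruct Rle_dec; lra. }
  destruct (Key b ltac:(lra) ltac:(lra)) as [_ [L' [HL' HH]]].
  exists L'; split; auto.
Qed.

Lemma cross (h : R -> R) a0 b0 L k : a0 < b0 -> 0 <= L ->
  (forall y z, a0 <= y <= b0 -> a0 <= z <= b0 -> Rabs (h y - h z) <= L * Rabs (y - z)) ->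
  h a0 < k -> k < h b0 ->
  exists t, a0 < t < b0 /\ h t = k /\ forall y, a0 <= y < t -> h y < k.
Proof.
  intros Hab HL Hl Ha Hb.
  set (E := fun x => a0 <= x <= b0 /\ forall y, a0 <= y <= x -> h y < k).
  assert (Ea : E a0) by (split; [lra| intros y Hy; replace y with a0 by lra; auto]).
  destruct (completeness E) as [s Hs].
  { exists b0; intros x Ex; apply Ex. }
  { exists a0; auto. }
  assert (Has : a0 <= s) by (apply Hs; auto).
  assert (Hsb : s <= b0) by (apply Hs; intros x Ex; apply Ex).
  assert (H1 : forall y, a0 <= y < s -> h y < k).
  { intros y Hy. destruct (lub_approx E s y Hs ltac:(lra)) as [x [[_ Ex] Hyx]]. apply Ex; lra. }
  assert (H2 : k <= h s).
  { destruct (Rle_or_lt k (h s)) as [|Hlt]; auto. exfalso.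
    assert (Hsb' : s < b0) by (destruct (Req_dec s b0); [subst; lra| lra]).
    set (eta := (k - h s) / (L + 1)).
    assert (Heta : 0 < eta) by (unfold eta; apply Rdiv_lt_0_compat; lra).
    assert (HLe : L * eta < k - h s).
    { unfold eta. apply (Rmult_lt_reg_r (L + 1)); [lra|]. field_simplify; [|lra]. nra. }
    set (x := Rmin (s + eta/2) b0).
    assert (Hx1 : s < x) by (unfold x, Rmin; destruct Rle_dec; lra).
    assert (Hx2 : x <= s + eta/2) by apply Rmin_l.
    assert (Hx3 : x <= b0) by apply Rmin_r.
    assert (E x).
    { split; [lra|]. intros y Hy. destruct (Rlt_or_le y s); [apply H1; lra|].
      assert (A := Hl y s ltac:(lra) ltac:(lra)). rewrite (Rabs_pos_eq (y - s)) in A by lra.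
      assert (L * (y - s) <= L * eta) by (apply Rmult_le_compat_l; lra).
      apply Rabs_le_between in A. lra. }
    assert (x <= s) by (apply Hs; auto). lra. }
  assert (H3 : h s <= k).
  { destruct (Rle_or_lt (h s) k) as [|Hlt]; auto. exfalso.
    assert (Has' : a0 < s) by (destruct (Req_dec s a0); [subst; lra| lra]).
    set (eta := (h s - k) / (L + 1)).
    assert (Heta : 0 < eta) by (unfold eta; apply Rdiv_lt_0_compat; lra).
    assert (HLe : L * eta < h s - k).
    { unfold eta. apply (Rmult_lt_reg_r (L + 1)); [lra|]. field_simplify; [|lra]. nra. }
    set (y := Rmax a0 (s - eta/2)).
    assert (Hy1 : y < s) by (unfold y, Rmax; destruct Rle_dec; lra).
    assert (Hy2 : s - eta/2 <= y) by apply Rmax_r.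
    assert (Hy3 : a0 <= y) by apply Rmax_l.
    assert (A := Hl y s ltac:(lra) ltac:(lra)). rewrite (absd y s) in A by lra.
    assert (L * (s - y) <= L * eta) by (apply Rmult_le_compat_l; lra).
    apply Rabs_le_between in A. assert (h y < k) by (apply H1; lra). lra. }
  exists s. assert (h s = k) by lra.
  split; [split|split; auto].
  - destruct (Req_dec s a0); [subst; lra|lra].
  - destruct (Req_dec s b0); [subst; lra|lra].
Qed.

Lemma Bern_upper n h u c A : 0 <= u <= 1 ->
  (forall k, (k <= n)%nat -> h k <= c + A * (INR k - INR n * u) ^ 2) ->
  Bern n h u <= c + A * (INR n * u * (1 - u)).
Proof.
  intros Hu H. eapply Rle_trans; [apply (Bern_mono n h (fun k => c + A * (INR k - INR n * u) ^ 2)); auto|].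
  rewrite Bern_plus, Bern_const, Bern_scal, Bern_var; lra.
Qed.

Lemma Bern_lower n h u c A : 0 <= u <= 1 ->
  (forall k, (k <= n)%nat -> c - A * (INR k - INR n * u) ^ 2 <= h k) ->
  c - A * (INR n * u * (1 - u)) <= Bern n h u.
Proof.
  intros Hu H. eapply Rle_trans; [|apply (Bern_mono n (fun k => c + (- A) * (INR k - INR n * u) ^ 2) h); auto].
  - rewrite Bern_plus, Bern_const, Bern_scal, Bern_var; lra.
  - intros k Hk; specialize (H k Hk); lra.
Qed.

Definition grid a b n k := a + (b - a) * (INR k / INR n).
Definition bpoly (g : R -> R) a b n x := Bern n (fun k => g (grid a b n k)) ((x - a) / (b - a)).

Lemma grid_in a b n k : a < b -> (0 < n)%nat -> (k <= n)%nat -> a <= grid a b n k <= b.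
Proof.
  intros Hab Hn Hk. unfold grid.
  assert (0 < INR n) by (apply lt_0_INR; lia).
  assert (0 <= INR k <= INR n) by (split; [apply pos_INR| apply le_INR; auto]).
  assert (0 <= INR k / INR n <= 1).
  { split; [apply Rdiv_le_0_compat; lra|]. apply (Rmult_le_reg_r (INR n)); auto. field_simplify; lra. }
  nra.
Qed.

Lemma bpoly_a g a b n : a < b -> bpoly g a b n a = g a.
Proof.
  intros Hab. unfold bpoly. replace ((a - a) / (b - a)) with 0 by (field; lra).
  rewrite Bern_0. unfold grid. f_equal. simpl. unfold Rdiv; ring.
Qed.

Lemma bpoly_b g a b n : a < b -> (0 < n)%nat -> bpoly g a b n b = g b.
Proof.
  intros Hab Hn. unfold bpoly. replace ((b - a) / (b - a)) with 1 by (field; lra).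
  rewrite Bern_1. unfold grid. f_equal.
  assert (0 < INR n) by (apply lt_0_INR; lia). field. lra.
Qed.

Lemma bpoly_smooth g a b n : a < b -> smooth (bpoly g a b n).
Proof.
  intros Hab. apply IsPoly_smooth. unfold bpoly.
  apply (Bern_poly n (fun k => g (grid a b n k)) (fun x => (x - a) / (b - a))).
  apply IsPoly_ext with (fun x => (x + (-a)) * (/ (b - a))); [|intros; unfold Rdiv; ring].
  apply (P_mul (fun x => x + -a) (fun _ => / (b - a))); [apply (P_add (fun x => x)); constructor|constructor].
Qed.

Definition dq (g : R -> R) a b m k := INR (S m) / (b - a) * (g (grid a b (S m) (S k)) - g (grid a b (S m) k)).

Lemma bpoly_deriv g a b m x : a < b ->
  is_derive (bpoly g a b (S m)) x (Bern m (dq g a b m) ((x - a) / (b - a))).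
Proof.
  intros Hab. unfold bpoly.
  eapply is_derive_eq.
  - apply (D_comp (Bern (S m) (fun k => g (grid a b (S m) k))) (fun x => (x - a) / (b - a))).
    + apply Bern_deriv.
    + apply D_ext with (fun x => x * (/ (b - a)) + (- a / (b - a))); [intros; field; lra|].
      eapply is_derive_eq.
      * apply (D_plus (fun x => x * / (b - a)) (fun _ => - a / (b - a))); [|apply D_const].
        apply (D_mult (fun x => x) (fun _ => / (b - a))); [apply D_id|apply D_const].
      * reflexivity.
  - unfold dq. rewrite Bern_scal. simpl. field. lra.
Qed.

Lemma bpoly_Derive g a b m x : a < b ->
  Derive (bpoly g a b (S m)) x = Bern m (dq g a b m) ((x - a) / (b - a)).
Proof. intros; apply is_derive_unique, bpoly_deriv; auto. Qed.

Lemma u_range a b x : a < b -> a <= x <= b -> 0 <= (x - a) / (b - a) <= 1.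
Proof.
  intros Hab Hx. split; [apply Rdiv_le_0_compat; lra|].
  apply (Rmult_le_reg_r (b - a)); [lra|]. field_simplify; lra.
Qed.

Lemma grid_diff a b m k : a < b -> grid a b (S m) (S k) - grid a b (S m) k = (b - a) / INR (S m).
Proof.
  intros Hab. unfold grid. rewrite (S_INR k).
  assert (0 < INR (S m)) by (apply lt_0_INR; lia). field. lra.
Qed.

Lemma bpoly_dbound g a b m sg x : a < b -> 0 <= sg ->
  (forall y z, a <= y <= b -> a <= z <= b -> Rabs (g y - g z) <= sg * Rabs (y - z)) ->
  a <= x <= b -> Rabs (Derive (bpoly g a b (S m)) x) <= sg.
Proof.
  intros Hab Hs Hl Hx. rewrite bpoly_Derive by auto.
  assert (Hu := u_range a b x Hab Hx).
  assert (HN : 0 < INR (S m)) by (apply lt_0_INR; lia).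
  assert (Hd : forall k, (k <= m)%nat -> Rabs (dq g a b m k) <= sg).
  { intros k Hk. unfold dq.
    assert (A := Hl (grid a b (S m) (S k)) (grid a b (S m) k) ltac:(apply grid_in; [lra|lia|lia]) ltac:(apply grid_in; [lra|lia|lia])).
    rewrite grid_diff in A by auto.
    rewrite Rabs_mult, (Rabs_pos_eq (INR (S m) / (b - a))) by (apply Rdiv_le_0_compat; lra).
    rewrite (Rabs_pos_eq ((b - a) / INR (S m))) in A by (apply Rdiv_le_0_compat; lra).
    apply (Rmult_le_compat_l (INR (S m) / (b - a))) in A; [|apply Rdiv_le_0_compat; lra].
    replace (INR (S m) / (b - a) * (sg * ((b - a) / INR (S m)))) with sg in A by (field; lra).
    exact A. }
  apply Rabs_le. split.
  - eapply Rle_trans; [|apply (Bern_lower m _ _ (- sg) 0); auto]; [lra|].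
    intros k Hk. specialize (Hd k Hk). apply Rabs_le_between in Hd. lra.
  - eapply Rle_trans; [apply (Bern_upper m _ _ sg 0); auto|lra].
    intros k Hk. specialize (Hd k Hk). apply Rabs_le_between in Hd. lra.
Qed.

Lemma abs_sq_bound t r : 0 < r -> Rabs t <= r + t ^ 2 / r.
Proof.
  intros Hr. assert (0 <= t ^ 2 / r) by (apply Rdiv_le_0_compat; nra).
  destruct (Rle_or_lt (Rabs t) r); [lra|].
  assert (t ^ 2 = Rabs t * Rabs t) by (rewrite <- Rabs_mult; simpl; rewrite Rmult_1_r, Rabs_pos_eq; nra).
  assert (Rabs t <= t ^ 2 / r); [|lra].
  apply (Rmult_le_reg_r r); auto. unfold Rdiv. rewrite Rmult_assoc, Rinv_l by lra. nra.
Qed.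

Lemma u_quarter u : u * (1 - u) <= / 4.
Proof. assert (H := pow2_ge_0 (u - / 2)). replace (/ 4) with (/ 2 * / 2) by field. nra. Qed.

Lemma grid_sub a b n k x : a < b -> (0 < n)%nat ->
  grid a b n k - x = (b - a) / INR n * (INR k - INR n * ((x - a) / (b - a))).
Proof.
  intros Hab Hn. assert (0 < INR n) by (apply lt_0_INR; lia). unfold grid. field; lra.
Qed.

Lemma bpoly_approx g a b m sg eps x : a < b -> 0 < sg -> 0 < eps ->
  (forall y z, a <= y <= b -> a <= z <= b -> Rabs (g y - g z) <= sg * Rabs (y - z)) ->
  sg ^ 2 * (b - a) ^ 2 / eps ^ 2 <= INR (S m) -> a <= x <= b ->
  Rabs (bpoly g a b (S m) x - g x) <= eps.
Proof.
  intros Hab Hs He Hl HN Hx. unfold bpoly.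
  set (n := S m) in *. set (N := INR n) in *. set (u := (x - a) / (b - a)).
  assert (HN0 : 0 < N) by (apply lt_0_INR; unfold n; lia).
  assert (Hu : 0 <= u <= 1) by (apply u_range; auto).
  set (C := sg * (b - a)). assert (HC : 0 < C) by (unfold C; nra).
  set (r := eps / (2 * C)). assert (Hr : 0 < r) by (unfold r; apply Rdiv_lt_0_compat; lra).
  set (A := C / (r * N ^ 2)). assert (HA : 0 <= A) by (unfold A; apply Rdiv_le_0_compat; [lra| apply Rmult_lt_0_compat; [lra|apply pow_lt; lra]]).
  assert (Hpt : forall k, (k <= n)%nat -> Rabs (g (grid a b n k) - g x) <= C * r + A * (INR k - N * u) ^ 2).
  { intros k Hk. eapply Rle_trans; [apply Hl; [apply grid_in; [lra|unfold n; lia|auto]|auto]|].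
    rewrite grid_sub by (auto; unfold n; lia). fold N u.
    rewrite Rabs_mult, (Rabs_pos_eq ((b - a) / N)) by (apply Rdiv_le_0_compat; lra).
    set (d := INR k - N * u).
    replace ((b - a) / N * Rabs d) with ((b - a) * Rabs (d / N))
      by (unfold Rdiv; rewrite Rabs_mult, (Rabs_pos_eq (/ N)) by (apply Rlt_le, Rinv_0_lt_compat; lra); ring).
    assert (B := abs_sq_bound (d / N) r Hr).
    apply (Rmult_le_compat_l C) in B; [|lra].
    replace (sg * ((b - a) * Rabs (d / N))) with (C * Rabs (d / N)) by (unfold C; ring).
    eapply Rle_trans; [exact B|]. right. unfold A. field. split; lra. }
  assert (Hfin : C * r + A * (N * u * (1 - u)) <= eps).
  { assert (E1 : C * r = eps / 2) by (unfold r; field; lra).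
    assert (E2 : A * (N * u * (1 - u)) = 2 * C ^ 2 / (eps * N) * (u * (1 - u))) by (unfold A, r; field; repeat split; lra).
    assert (Q := u_quarter u).
    assert (H0 : 0 <= 2 * C ^ 2 / (eps * N)) by (apply Rdiv_le_0_compat; nra).
    assert (H1 : 2 * C ^ 2 / (eps * N) * (u * (1 - u)) <= 2 * C ^ 2 / (eps * N) * / 4) by (apply Rmult_le_compat_l; auto).
    assert (H2 : 2 * C ^ 2 / (eps * N) * / 4 <= eps / 2).
    { replace (2 * C ^ 2 / (eps * N) * / 4) with (C ^ 2 / eps ^ 2 * (eps / (2 * N))) by (field; lra).
      assert (C ^ 2 / eps ^ 2 <= N) by (unfold C; replace ((sg * (b - a)) ^ 2 / eps ^ 2) with (sg ^ 2 * (b - a) ^ 2 / eps ^ 2) by (field; lra); auto).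
      assert (0 <= eps / (2 * N)) by (apply Rdiv_le_0_compat; lra).
      apply Rmult_le_compat_r with (r := eps / (2 * N)) in H; auto.
      replace (N * (eps / (2 * N))) with (eps / 2) in H by (field; lra). auto. }
    lra. }
  apply Rabs_le. split.
  - assert (L := Bern_lower n (fun k => g (grid a b n k)) u (g x - C * r) A Hu).
    assert (L' : g x - C * r - A * (N * u * (1 - u)) <= Bern n (fun k => g (grid a b n k)) u).
    { apply L. intros k Hk. specialize (Hpt k Hk). apply Rabs_le_between in Hpt. fold N. lra. }
    lra.
  - assert (L := Bern_upper n (fun k => g (grid a b n k)) u (g x + C * r) A Hu).
    assert (L' : Bern n (fun k => g (grid a b n k)) u <= g x + C * r + A * (N * u * (1 - u))).
    { apply L. intros k Hk. specialize (Hpt k Hk). apply Rabs_le_between in Hpt. fold N. lra. }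
    lra.
Qed.

Lemma dq_bound g a b m sg k : a < b -> 0 <= sg -> (k <= m)%nat ->
  (forall y z, a <= y <= b -> a <= z <= b -> Rabs (g y - g z) <= sg * Rabs (y - z)) ->
  Rabs (dq g a b m k) <= sg.
Proof.
  intros Hab Hs Hk Hl.
  assert (HN : 0 < INR (S m)) by (apply lt_0_INR; lia).
  unfold dq.
  assert (A := Hl (grid a b (S m) (S k)) (grid a b (S m) k) ltac:(apply grid_in; [lra|lia|lia]) ltac:(apply grid_in; [lra|lia|lia])).
  rewrite grid_diff in A by auto.
  rewrite Rabs_mult, (Rabs_pos_eq (INR (S m) / (b - a))) by (apply Rdiv_le_0_compat; lra).
  rewrite (Rabs_pos_eq ((b - a) / INR (S m))) in A by (apply Rdiv_le_0_compat; lra).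
  apply (Rmult_le_compat_l (INR (S m) / (b - a))) in A; [|apply Rdiv_le_0_compat; lra].
  replace (INR (S m) / (b - a) * (sg * ((b - a) / INR (S m)))) with sg in A by (field; lra).
  exact A.
Qed.

Lemma grid_close a b m k x w : a < b -> 0 < w -> a <= x <= b -> (b - a) / INR (S m) <= w ->
  Rabs (INR k - INR m * ((x - a) / (b - a))) <= INR m * (w / (b - a)) ->
  Rabs (grid a b (S m) k - x) <= 2 * w /\ Rabs (grid a b (S m) (S k) - x) <= 2 * w.
Proof.
  intros Hab Hw Hx Hn Hd.
  set (u := (x - a) / (b - a)) in *. assert (Hu : 0 <= u <= 1) by (apply u_range; auto).
  set (M := INR m) in *. assert (HM : 0 <= M) by apply pos_INR.
  assert (HNe : INR (S m) = M + 1) by (unfold M; apply S_INR).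
  set (d := INR k - M * u) in *.
  assert (HC : 0 < (b - a) / (M + 1)) by (apply Rdiv_lt_0_compat; lra).
  rewrite HNe in Hn.
  assert (Hkey : forall e, Rabs e <= M * (w / (b - a)) + 1 -> Rabs ((b - a) / (M + 1) * e) <= 2 * w).
  { intros e He. rewrite Rabs_mult, Rabs_pos_eq by lra.
    apply Rmult_le_compat_l with (r := (b - a) / (M + 1)) in He; [|lra].
    eapply Rle_trans; [exact He|].
    replace ((b - a) / (M + 1) * (M * (w / (b - a)) + 1)) with (w * (M / (M + 1)) + (b - a) / (M + 1)) by (field; lra).
    assert (M / (M + 1) <= 1) by (apply (Rmult_le_reg_r (M + 1)); [lra|]; field_simplify; lra).
    nra. }
  split.
  - rewrite grid_sub by (lra || lia). fold u. rewrite HNe. apply Hkey.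
    replace (INR k - (M + 1) * u) with (d - u) by (unfold d; ring).
    eapply Rle_trans; [apply Rabs_triang|]. rewrite Rabs_Ropp, (Rabs_pos_eq u) by lra. lra.
  - rewrite grid_sub by (lra || lia). fold u. rewrite HNe. apply Hkey.
    replace (INR (S k) - (M + 1) * u) with (d + (1 - u)) by (unfold d; rewrite S_INR; ring).
    eapply Rle_trans; [apply Rabs_triang|]. rewrite (Rabs_pos_eq (1 - u)) by lra. lra.
Qed.

Lemma bpoly_dnear g a b m sg s w x : a < b -> 0 < sg -> Rabs s <= sg -> 0 < w -> (1 <= m)%nat ->
  (forall y z, a <= y <= b -> a <= z <= b -> Rabs (g y - g z) <= sg * Rabs (y - z)) ->
  (b - a) / INR (S m) <= w -> 1 <= INR m * (w / (b - a)) ^ 2 -> a <= x <= b ->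
  (forall y z, a <= y <= b -> a <= z <= b -> Rabs (y - x) <= 2 * w -> Rabs (z - x) <= 2 * w ->
     g z - g y = s * (z - y)) ->
  Rabs (Derive (bpoly g a b (S m)) x - s) <= sg / 2.
Proof.
  intros Hab Hs Hss Hw Hm Hl Hn Hmr Hx Hlin.
  rewrite bpoly_Derive by auto.
  set (u := (x - a) / (b - a)). assert (Hu : 0 <= u <= 1) by (apply u_range; auto).
  set (M := INR m). assert (HM : 1 <= M) by (unfold M; apply (le_INR 1); auto).
  set (r := w / (b - a)). assert (Hr : 0 < r) by (unfold r; apply Rdiv_lt_0_compat; lra).
  set (A := 2 * sg / (M * r) ^ 2).
  assert (HMr : 0 < (M * r) ^ 2) by (apply pow_lt; nra).
  assert (HA : 0 <= A) by (unfold A; apply Rdiv_le_0_compat; lra).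
  assert (Hpt : forall k, (k <= m)%nat -> Rabs (dq g a b m k - s) <= A * (INR k - M * u) ^ 2).
  { intros k Hk. destruct (Rle_or_lt (Rabs (INR k - M * u)) (M * r)) as [Hc|Hc].
    - destruct (grid_close a b m k x w Hab Hw Hx Hn Hc) as [G1 G2].
      unfold dq. rewrite (Hlin (grid a b (S m) k) (grid a b (S m) (S k))); auto;
        try (apply grid_in; [lra|lia|lia]).
      rewrite grid_diff by auto.
      assert (0 < INR (S m)) by (apply lt_0_INR; lia).
      replace (INR (S m) / (b - a) * (s * ((b - a) / INR (S m))) - s) with 0 by (field; lra).
      rewrite Rabs_R0. apply Rmult_le_pos; auto. apply pow2_ge_0.
    - assert (B := dq_bound g a b m sg k Hab ltac:(lra) Hk Hl).
      assert (Hsq : (M * r) ^ 2 <= (INR k - M * u) ^ 2).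
      { rewrite <- (pow2_abs (INR k - M * u)).
        apply pow_incr; split; [nra|lra]. }
      assert (2 * sg <= A * (INR k - M * u) ^ 2).
      { unfold A. apply (Rmult_le_reg_r ((M * r) ^ 2)); auto.
        replace (2 * sg / (M * r) ^ 2 * (INR k - M * u) ^ 2 * (M * r) ^ 2) with (2 * sg * (INR k - M * u) ^ 2) by (field; nra).
        nra. }
      eapply Rle_trans; [apply Rabs_triang|]. rewrite Rabs_Ropp. lra. }
  assert (Hfin : A * (M * u * (1 - u)) <= sg / 2).
  { assert (Q := u_quarter u).
    replace (A * (M * u * (1 - u))) with (2 * sg / (M * r ^ 2) * (u * (1 - u))) by (unfold A; field; nra).
    assert (H0 : 0 <= 2 * sg / (M * r ^ 2)) by (apply Rdiv_le_0_compat; nra).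
    apply Rmult_le_compat_l with (r := 2 * sg / (M * r ^ 2)) in Q; auto.
    eapply Rle_trans; [exact Q|].
    replace (2 * sg / (M * r ^ 2) * / 4) with (sg / 2 * / (M * r ^ 2)) by (field; nra).
    assert (/ (M * r ^ 2) <= 1).
    { replace 1 with (/ 1) by field. apply Rinv_le_contravar; [lra|]. unfold M, r. lra. }
    nra. }
  apply Rabs_le. split.
  - assert (L' : s - A * (M * u * (1 - u)) <= Bern m (dq g a b m) u).
    { apply Bern_lower; auto. intros k Hk. specialize (Hpt k Hk). apply Rabs_le_between in Hpt. fold M. lra. }
    lra.
  - assert (L' : Bern m (dq g a b m) u <= s + A * (M * u * (1 - u))).
    { apply Bern_upper; auto. intros k Hk. specialize (Hpt k Hk). apply Rabs_le_between in Hpt. fold M. lra. }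
    lra.
Qed.

Definition tent sg rho c v := Rmin (c + sg * v) (c + 2 * sg * rho - sg * v).

Lemma tent_le1 sg rho c v : tent sg rho c v <= c + sg * v.
Proof. apply Rmin_l. Qed.
Lemma tent_le2 sg rho c v : tent sg rho c v <= c + 2 * sg * rho - sg * v.
Proof. apply Rmin_r. Qed.
Lemma tent_eq sg rho c v : 0 <= sg -> v <= rho -> tent sg rho c v = c + sg * v.
Proof. intros. unfold tent. apply Rmin_left. nra. Qed.

Lemma max_lip a1 a2 b1 b2 K : Rabs (a1 - a2) <= K -> Rabs (b1 - b2) <= K -> Rabs (Rmax a1 b1 - Rmax a2 b2) <= K.
Proof.
  intros H1 H2. apply Rabs_le_between in H1. apply Rabs_le_between in H2. apply Rabs_le.
  unfold Rmax; repeat destruct Rle_dec; lra.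
Qed.
Lemma min_lip a1 a2 b1 b2 K : Rabs (a1 - a2) <= K -> Rabs (b1 - b2) <= K -> Rabs (Rmin a1 b1 - Rmin a2 b2) <= K.
Proof.
  intros H1 H2. apply Rabs_le_between in H1. apply Rabs_le_between in H2. apply Rabs_le.
  unfold Rmin; repeat destruct Rle_dec; lra.
Qed.

Lemma tent_lip sg rho c v1 v2 K : 0 <= sg -> Rabs (v1 - v2) <= K -> Rabs (tent sg rho c v1 - tent sg rho c v2) <= sg * K.
Proof.
  intros Hs Hv. unfold tent. apply min_lip.
  - replace (c + sg * v1 - (c + sg * v2)) with (sg * (v1 - v2)) by ring.
    rewrite Rabs_mult, Rabs_pos_eq by lra. apply Rmult_le_compat_l; auto.
  - replace (c + 2 * sg * rho - sg * v1 - (c + 2 * sg * rho - sg * v2)) with (sg * (v2 - v1)) by ring.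
    rewrite Rabs_mult, Rabs_pos_eq by lra. rewrite Rabs_minus_sym. apply Rmult_le_compat_l; auto.
Qed.

Lemma tent_upper c sg L rho tau v fx : 0 <= L <= sg -> 0 < rho -> (sg + L) * rho <= tau ->
  c - L * Rabs v <= fx -> tent sg rho c v <= fx + tau.
Proof.
  intros HL Hr Ht Hf. assert (A1 := tent_le1 sg rho c v). assert (A2 := tent_le2 sg rho c v).
  destruct (Rle_or_lt v 0).
  - rewrite Rabs_left1 in Hf by lra. assert (sg * v <= L * v) by nra. nra.
  - rewrite Rabs_pos_eq in Hf by lra. destruct (Rle_or_lt v rho).
    + assert ((sg + L) * v <= (sg + L) * rho) by (apply Rmult_le_compat_l; lra). nra.
    + assert ((sg - L) * rho <= (sg - L) * v) by (apply Rmult_le_compat_l; lra). nra.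
Qed.

Definition max5 F A M P B := Rmax F (Rmax (Rmax A M) (Rmax P B)).
Lemma max5_le F A M P B V : F <= V -> A <= V -> M <= V -> P <= V -> B <= V -> max5 F A M P B <= V.
Proof. intros; unfold max5; repeat apply Rmax_lub; auto. Qed.
Lemma max5_F F A M P B : F <= max5 F A M P B.
Proof. unfold max5, Rmax; repeat destruct Rle_dec; lra. Qed.
Lemma max5_A F A M P B : A <= max5 F A M P B.
Proof. unfold max5, Rmax; repeat destruct Rle_dec; lra. Qed.
Lemma max5_M F A M P B : M <= max5 F A M P B.
Proof. unfold max5, Rmax; repeat destruct Rle_dec; lra. Qed.
Lemma max5_P F A M P B : P <= max5 F A M P B.
Proof. unfold max5, Rmax; repeat destruct Rle_dec; lra. Qed.
Lemma max5_B F A M P B : B <= max5 F A M P B.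
Proof. unfold max5, Rmax; repeat destruct Rle_dec; lra. Qed.
Lemma max5_lip F1 A1 M1 P1 B1 F2 A2 M2 P2 B2 K :
  Rabs (F1 - F2) <= K -> Rabs (A1 - A2) <= K -> Rabs (M1 - M2) <= K -> Rabs (P1 - P2) <= K -> Rabs (B1 - B2) <= K ->
  Rabs (max5 F1 A1 M1 P1 B1 - max5 F2 A2 M2 P2 B2) <= K.
Proof. intros; unfold max5; repeat apply max_lip; auto. Qed.

Lemma strict_incr (h : R -> R) x1 x2 : x1 < x2 -> (forall x, is_derive h x (Derive h x)) ->
  (forall x, x1 <= x <= x2 -> 0 < Derive h x) -> h x1 < h x2.
Proof.
  intros H12 Hd Hp.
  destruct (MVT_gen h x1 x2 (Derive h)) as [c [Hc E]].
  - intros; apply Hd.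
  - intros x _. apply continuity_pt_filterlim. apply (ex_derive_continuous h). eexists; apply Hd.
  - rewrite Rmin_left, Rmax_right in Hc by lra. specialize (Hp c Hc). nra.
Qed.

Lemma strict_decr (h : R -> R) x1 x2 : x1 < x2 -> (forall x, is_derive h x (Derive h x)) ->
  (forall x, x1 <= x <= x2 -> Derive h x < 0) -> h x2 < h x1.
Proof.
  intros H12 Hd Hp.
  destruct (MVT_gen h x1 x2 (Derive h)) as [c [Hc E]].
  - intros; apply Hd.
  - intros x _. apply continuity_pt_filterlim. apply (ex_derive_continuous h). eexists; apply Hd.
  - rewrite Rmin_left, Rmax_right in Hc by lra. specialize (Hp c Hc). nra.
Qed.

Lemma cont_affine (h : R -> R) al c : (forall x, ex_derive h x) -> continuity (fun x => al * h x + c).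
Proof.
  intros Hd x. apply continuity_pt_filterlim. apply (ex_derive_continuous (fun x => al * h x + c)).
  destruct (Hd x) as [l Hl]. exists (al * l + 0).
  apply (D_plus (fun x => al * h x) (fun _ => c)); [|apply D_const].
  apply (is_derive_scal h x al l Hl).
Qed.

Theorem lemma3p2 (f : R -> R) (phim phip : R) :
  locally_lipschitz f ->
  phim < 0 -> 0 < phip ->
  f phip = f phim ->
  (forall z, phim < z < phip -> f z - f phip < 0) ->
  forall kappa : R, f 0 < kappa < f phip ->
  exists Rc : R, 0 < Rc /\
  forall delta : R, 0 < delta < kappa - f 0 ->
  exists (ft : R -> R) (psim psip : R),
    smooth ft /\
    phim < psim < phip /\ phim < psip < phip /\ psim < 0 /\ 0 < psip /\
    (* (i) *)
    ft phip = ft phim /\ Derive ft phip <> 0 /\ Derive ft phim <> 0 /\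
    (forall z, phim < z < phip -> ft z - ft phip < 0) /\
    (* (ii) *)
    ft psip = kappa /\ ft psim = kappa /\
    Derive ft psip <> 0 /\ Derive ft psim <> 0 /\
    (forall z, psim < z < psip -> ft z - ft psip < 0) /\
    (* (iii) *)
    (forall z, phim <= z <= phip ->
       Rabs (f z - ft z) < delta /\ Rabs (Derive ft z) < Rc).
Proof.
  intros Hloc Ha Hb Heq Hneg kappa [Hk1 Hk2].
  destruct (loclip_interval f phim phip Hloc ltac:(lra)) as [L [HL Hlip]].
  destruct (cross f 0 phip L kappa Hb HL) as [tp [Htp [Ftp Btp]]]; auto.
  { intros y z Hy Hz; apply Hlip; lra. }
  destruct (cross (fun y => f (- y)) 0 (- phim) L kappa ltac:(lra) HL) as [s [Hs [Fs Bs]]].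
  { intros y z Hy Hz. replace (y - z) with (- ((- y) - (- z))) by ring. rewrite Rabs_Ropp. apply Hlip; lra. }
  { rewrite Ropp_0; auto. }
  { rewrite Ropp_involutive; lra. }
  simpl in Fs, Bs.
  set (tm := - s).
  assert (Ftm : f tm = kappa) by (unfold tm; auto).
  assert (Htm : phim < tm < 0) by (unfold tm; lra).
  assert (Fbelow : forall x, tm < x < tp -> f x < kappa).
  { intros x Hx. destruct (Rle_or_lt 0 x).
    - apply Btp; lra.
    - replace x with (- (- x)) by ring. apply Bs. unfold tm in Hx; lra. }
  assert (Flip : forall x p, phim <= x <= phip -> phim <= p <= phip -> f p - L * Rabs (x - p) <= f x <= f p + L * Rabs (x - p)).
  { intros x p Hx Hp. assert (A := Hlip x p Hx Hp). apply Rabs_le_between in A. lra. }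
  clearbody tm. clear Bs Btp Hs Fs s.
  set (c0 := f phip) in *.
  assert (Hc0 : f phip = c0) by reflexivity. clearbody c0.
  set (D0 := Rmin (Rmin (tm - phim) (- tm)) (Rmin tp (phip - tp))).
  assert (HD0 : 0 < D0) by (unfold D0; repeat apply Rmin_glb_lt; lra).
  assert (D1 : D0 <= tm - phim) by (unfold D0; eapply Rle_trans; [apply Rmin_l|apply Rmin_l]).
  assert (D2 : D0 <= - tm) by (unfold D0; eapply Rle_trans; [apply Rmin_l|apply Rmin_r]).
  assert (D3 : D0 <= tp) by (unfold D0; eapply Rle_trans; [apply Rmin_r|apply Rmin_l]).
  assert (D4 : D0 <= phip - tp) by (unfold D0; eapply Rle_trans; [apply Rmin_r|apply Rmin_r]).
  clearbody D0.
  set (K := c0 - kappa). assert (HK : 0 < K) by (unfold K; lra). assert (HKd : K = c0 - kappa) by reflexivity.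
  set (sg := L + 1 + 4 * K / D0).
  assert (HsgL : L + 1 <= sg) by (unfold sg; assert (0 <= 4 * K / D0) by (apply Rdiv_le_0_compat; lra); lra).
  assert (HsgD : 4 * K <= sg * D0) by (unfold sg; replace ((L + 1 + 4 * K / D0) * D0) with ((L + 1) * D0 + 4 * K) by (field; lra); nra).
  clearbody sg K.
  assert (Hsg : 0 < sg) by lra.
  exists (sg + 1). split; [lra|].
  intros delta [Hd1 Hd2].
  set (tau := delta / 4).
  assert (Htau : 0 < tau) by (unfold tau; lra).
  set (rho := Rmin (tau / (sg + L)) (Rmin (D0 / 8) (K / (4 * sg)))).
  assert (Hrho : 0 < rho).
  { unfold rho. repeat apply Rmin_glb_lt; apply Rdiv_lt_0_compat; lra. }
  assert (R1 : (sg + L) * rho <= tau).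
  { assert (rho <= tau / (sg + L)) by apply Rmin_l.
    apply Rmult_le_compat_l with (r := sg + L) in H; [|lra].
    replace ((sg + L) * (tau / (sg + L))) with tau in H by (field; lra). auto. }
  assert (R2 : rho <= D0 / 8) by (unfold rho; eapply Rle_trans; [apply Rmin_r|apply Rmin_l]).
  assert (R3 : sg * rho <= K / 4).
  { assert (rho <= K / (4 * sg)) by (unfold rho; eapply Rle_trans; [apply Rmin_r|apply Rmin_r]).
    apply Rmult_le_compat_l with (r := sg) in H; [|lra].
    replace (sg * (K / (4 * sg))) with (K / 4) in H by (field; lra). auto. }
  clearbody rho.
  assert (P1 : sg * (tm - phim) >= sg * D0) by (apply Rle_ge, Rmult_le_compat_l; lra).
  assert (P2 : sg * (- tm) >= sg * D0) by (apply Rle_ge, Rmult_le_compat_l; lra).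
  assert (P3 : sg * tp >= sg * D0) by (apply Rle_ge, Rmult_le_compat_l; lra).
  assert (P4 : sg * (phip - tp) >= sg * D0) by (apply Rle_ge, Rmult_le_compat_l; lra).
  assert (P5 : sg * D0 >= 8 * (sg * rho)) by (apply Rle_ge; replace (8 * (sg * rho)) with (sg * (8 * rho)) by ring; apply Rmult_le_compat_l; lra).
  assert (P6 : sg * rho <= (sg + L) * rho) by (apply Rmult_le_compat_r; lra).
  set (mu := sg * rho / 2).
  set (eps := mu / 2).
  assert (Hmu : 0 < mu) by (unfold mu; nra).
  set (g := fun x => max5 (f x - tau) (tent sg rho c0 (phim - x)) (tent sg rho kappa (tm - x))
                          (tent sg rho kappa (x - tp)) (tent sg rho c0 (x - phip))).
  assert (Glip : forall y z, phim <= y <= phip -> phim <= z <= phip -> Rabs (g y - g z) <= sg * Rabs (y - z)).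
  { intros y z Hy Hz. unfold g. apply max5_lip.
    - replace (f y - tau - (f z - tau)) with (f y - f z) by ring.
      eapply Rle_trans; [apply Hlip; auto|]. apply Rmult_le_compat_r; [apply Rabs_pos|lra].
    - apply tent_lip; [lra|]. replace (phim - y - (phim - z)) with (- (y - z)) by ring. rewrite Rabs_Ropp; lra.
    - apply tent_lip; [lra|]. replace (tm - y - (tm - z)) with (- (y - z)) by ring. rewrite Rabs_Ropp; lra.
    - apply tent_lip; [lra|]. replace (y - tp - (z - tp)) with (y - z) by ring. lra.
    - apply tent_lip; [lra|]. replace (y - phip - (z - phip)) with (y - z) by ring. lra. }
  assert (Gtube : forall x, phim <= x <= phip -> f x - tau <= g x <= f x + tau).
  { intros x Hx. split; [apply max5_F|]. unfold g. apply max5_le; [lra| | | |].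
    - apply (tent_upper _ _ L); try lra. destruct (Flip x phim Hx ltac:(lra)). rewrite ?Hc0, <- ?Heq in *. rewrite Rabs_minus_sym. lra.
    - apply (tent_upper _ _ L); try lra. destruct (Flip x tm Hx ltac:(lra)). rewrite ?Hc0, <- ?Heq in *. rewrite Rabs_minus_sym. lra.
    - apply (tent_upper _ _ L); try lra. destruct (Flip x tp Hx ltac:(lra)). rewrite ?Hc0, <- ?Heq in *. lra.
    - apply (tent_upper _ _ L); try lra. destruct (Flip x phip Hx ltac:(lra)). rewrite ?Hc0, <- ?Heq in *. lra. }
  assert (La : forall x, phim <= x <= phip -> x <= phim + rho -> g x = c0 + sg * (phim - x)).
  { intros x Hx Hxr. unfold g. rewrite <- (tent_eq sg rho c0 (phim - x)) by lra.
    apply Rle_antisym; [|apply max5_A]. rewrite (tent_eq sg rho c0 (phim - x)) by lra.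
    assert (Q : sg * x <= sg * (phim + rho)) by (apply Rmult_le_compat_l; lra).
    assert (Q2 : (sg + L) * (x - phim) <= (sg + L) * rho) by (apply Rmult_le_compat_l; lra).
    apply max5_le.
    - destruct (Flip x phim Hx ltac:(lra)). rewrite Rabs_pos_eq in H0 by lra. rewrite <- ?Heq in *. lra.
    - lra.
    - eapply Rle_trans; [apply tent_le2|]. lra.
    - eapply Rle_trans; [apply tent_le1|]. lra.
    - eapply Rle_trans; [apply tent_le1|]. lra. }

  assert (Lm : forall x, phim <= x <= phip -> Rabs (x - tm) <= rho -> g x = kappa + sg * (tm - x)).
  { intros x Hx Hxr. unfold g. apply Rabs_le_between in Hxr as Hxr'.
    rewrite <- (tent_eq sg rho kappa (tm - x)) by lra.
    apply Rle_antisym; [|apply max5_M]. rewrite (tent_eq sg rho kappa (tm - x)) by lra.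
    assert (Q : sg * x <= sg * (tm + rho)) by (apply Rmult_le_compat_l; lra).
    assert (Q' : sg * (tm - rho) <= sg * x) by (apply Rmult_le_compat_l; lra).
    assert (Q3 : L * Rabs (x - tm) <= L * rho) by (apply Rmult_le_compat_l; lra).
    apply max5_le.
    - destruct (Flip x tm Hx ltac:(lra)). lra.
    - eapply Rle_trans; [apply tent_le1|]. lra.
    - lra.
    - eapply Rle_trans; [apply tent_le1|]. lra.
    - eapply Rle_trans; [apply tent_le1|]. lra. }
  assert (Lp : forall x, phim <= x <= phip -> Rabs (x - tp) <= rho -> g x = kappa + sg * (x - tp)).
  { intros x Hx Hxr. unfold g. apply Rabs_le_between in Hxr as Hxr'.
    rewrite <- (tent_eq sg rho kappa (x - tp)) by lra.
    apply Rle_antisym; [|apply max5_P]. rewrite (tent_eq sg rho kappa (x - tp)) by lra.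
    assert (Q : sg * x <= sg * (tp + rho)) by (apply Rmult_le_compat_l; lra).
    assert (Q' : sg * (tp - rho) <= sg * x) by (apply Rmult_le_compat_l; lra).
    assert (Q3 : L * Rabs (x - tp) <= L * rho) by (apply Rmult_le_compat_l; lra).
    apply max5_le.
    - destruct (Flip x tp Hx ltac:(lra)). lra.
    - eapply Rle_trans; [apply tent_le1|]. lra.
    - eapply Rle_trans; [apply tent_le1|]. lra.
    - lra.
    - eapply Rle_trans; [apply tent_le1|]. lra. }
  assert (Lb : forall x, phim <= x <= phip -> phip - rho <= x -> g x = c0 + sg * (x - phip)).
  { intros x Hx Hxr. unfold g.
    rewrite <- (tent_eq sg rho c0 (x - phip)) by lra.
    apply Rle_antisym; [|apply max5_B]. rewrite (tent_eq sg rho c0 (x - phip)) by lra.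
    assert (Q : sg * (phip - rho) <= sg * x) by (apply Rmult_le_compat_l; lra).
    assert (Q2 : (sg + L) * (phip - x) <= (sg + L) * rho) by (apply Rmult_le_compat_l; lra).
    apply max5_le.
    - destruct (Flip x phip Hx ltac:(lra)). rewrite Hc0 in *. rewrite Rabs_minus_sym, Rabs_pos_eq in H0 by lra. lra.
    - eapply Rle_trans; [apply tent_le1|]. lra.
    - eapply Rle_trans; [apply tent_le1|]. lra.
    - eapply Rle_trans; [apply tent_le2|]. lra.
    - lra. }
  assert (M1 : forall x, phim + rho / 2 <= x <= phip - rho / 2 -> g x <= c0 - mu).
  { intros x Hx. unfold g, mu.
    assert (Q : sg * x <= sg * (phip - rho / 2)) by (apply Rmult_le_compat_l; lra).
    assert (Q' : sg * (phim + rho / 2) <= sg * x) by (apply Rmult_le_compat_l; lra).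
    assert (Fx : f x < c0) by (assert (A := Hneg x ltac:(lra)); lra).
    apply max5_le.
    - lra.
    - eapply Rle_trans; [apply tent_le1|]. lra.
    - assert (A1 := tent_le1 sg rho kappa (tm - x)). assert (A2 := tent_le2 sg rho kappa (tm - x)). lra.
    - assert (A1 := tent_le1 sg rho kappa (x - tp)). assert (A2 := tent_le2 sg rho kappa (x - tp)). lra.
    - eapply Rle_trans; [apply tent_le1|]. lra. }
  assert (M2 : forall x, tm + rho / 2 <= x <= tp - rho / 2 -> g x <= kappa - mu).
  { intros x Hx. unfold g, mu.
    assert (Q : sg * x <= sg * (tp - rho / 2)) by (apply Rmult_le_compat_l; lra).
    assert (Q' : sg * (tm + rho / 2) <= sg * x) by (apply Rmult_le_compat_l; lra).
    assert (Fx : f x < kappa) by (apply Fbelow; lra).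
    apply max5_le.
    - lra.
    - eapply Rle_trans; [apply tent_le1|]. lra.
    - eapply Rle_trans; [apply tent_le1|]. lra.
    - eapply Rle_trans; [apply tent_le1|]. lra.
    - eapply Rle_trans; [apply tent_le1|]. lra. }
  set (w := rho / 4). assert (Hw : 0 < w) by (unfold w; lra).
  set (ba := phip - phim). assert (Hba : 0 < ba) by (unfold ba; lra).
  assert (Heps : 0 < eps) by (unfold eps; lra).
  assert (T1 : 0 <= sg ^ 2 * ba ^ 2 / eps ^ 2) by (apply Rdiv_le_0_compat; [nra| apply pow_lt; lra]).
  assert (T2 : 0 < ba / w) by (apply Rdiv_lt_0_compat; lra).
  assert (T3 : 0 <= (ba / w) ^ 2) by apply pow2_ge_0.
  destruct (INR_unbounded (1 + sg ^ 2 * ba ^ 2 / eps ^ 2 + ba / w + (ba / w) ^ 2)) as [m Hm].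
  assert (Hm1 : (1 <= m)%nat) by (destruct m; [change (INR 0) with 0 in Hm; lra | lia]).
  assert (HNm : INR (S m) = INR m + 1) by apply S_INR.
  assert (Cb : sg ^ 2 * ba ^ 2 / eps ^ 2 <= INR (S m)) by lra.
  assert (Cc : ba / INR (S m) <= w).
  { assert (0 < INR (S m)) by lra.
    apply (Rmult_le_reg_r (INR (S m))); auto. unfold Rdiv at 1. rewrite Rmult_assoc, Rinv_l, Rmult_1_r by lra.
    assert (ba / w <= INR (S m)) by lra.
    apply (Rmult_le_compat_l w) in H0; [|lra]. replace (w * (ba / w)) with ba in H0 by (field; lra). lra. }
  assert (Cd : 1 <= INR m * (w / ba) ^ 2).
  { assert (H0 : (ba / w) ^ 2 <= INR m) by lra.
    apply (Rmult_le_compat_r ((w / ba) ^ 2)) in H0; [|apply pow2_ge_0].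
    replace ((ba / w) ^ 2 * (w / ba) ^ 2) with 1 in H0 by (field; lra). lra. }
  set (ft := bpoly g phim phip (S m)).
  assert (Fsm : smooth ft) by (apply bpoly_smooth; lra).
  assert (Fd : forall x, is_derive ft x (Derive ft x)).
  { intros x. unfold ft. rewrite bpoly_Derive by lra. apply bpoly_deriv; lra. }
  assert (Fex : forall x, ex_derive ft x) by (intros x; eexists; apply Fd).
  assert (Fa : ft phim = c0).
  { unfold ft. rewrite bpoly_a by lra. rewrite La; [ring|lra|lra]. }
  assert (Fb : ft phip = c0).
  { unfold ft. rewrite bpoly_b by (lra || lia). rewrite Lb; [ring|lra|lra]. }
  assert (Fapp : forall x, phim <= x <= phip -> Rabs (ft x - g x) <= eps).
  { intros x Hx. apply (bpoly_approx g phim phip m sg eps x); auto; lra. }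
  assert (Fdb : forall x, phim <= x <= phip -> Rabs (Derive ft x) <= sg).
  { intros x Hx. apply bpoly_dbound; auto; lra. }
  assert (Dgen : forall x s0, phim <= x <= phip -> Rabs s0 <= sg ->
     (forall y z, phim <= y <= phip -> phim <= z <= phip -> Rabs (y - x) <= 2 * w -> Rabs (z - x) <= 2 * w ->
        g z - g y = s0 * (z - y)) -> Rabs (Derive ft x - s0) <= sg / 2).
  { intros x s0 Hx Hs0 Hlin. apply (bpoly_dnear g phim phip m sg s0 w x); auto; lra. }
  assert (Da : forall x, phim <= x <= phim + rho / 2 -> Derive ft x <= - sg / 2).
  { intros x Hx. assert (A : Rabs (Derive ft x - - sg) <= sg / 2).
    { apply Dgen; [lra| rewrite Rabs_Ropp, Rabs_pos_eq; lra|].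
      intros y z Hy Hz Hyx Hzx. apply Rabs_le_between in Hyx. apply Rabs_le_between in Hzx. unfold w in *.
      rewrite (La y), (La z) by lra. ring. }
    apply Rabs_le_between in A. lra. }
  assert (Db : forall x, phip - rho / 2 <= x <= phip -> sg / 2 <= Derive ft x).
  { intros x Hx. assert (A : Rabs (Derive ft x - sg) <= sg / 2).
    { apply Dgen; [lra| rewrite Rabs_pos_eq; lra|].
      intros y z Hy Hz Hyx Hzx. apply Rabs_le_between in Hyx. apply Rabs_le_between in Hzx. unfold w in *.
      rewrite (Lb y), (Lb z) by lra. ring. }
    apply Rabs_le_between in A. lra. }
  assert (Dm : forall x, tm - rho / 2 <= x <= tm + rho / 2 -> Derive ft x <= - sg / 2).
  { intros x Hx. assert (A : Rabs (Derive ft x - - sg) <= sg / 2).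
    { apply Dgen; [lra| rewrite Rabs_Ropp, Rabs_pos_eq; lra|].
      intros y z Hy Hz Hyx Hzx. apply Rabs_le_between in Hyx. apply Rabs_le_between in Hzx. unfold w in *.
      rewrite (Lm y), (Lm z) by (try apply Rabs_le_between; lra). ring. }
    apply Rabs_le_between in A. lra. }
  assert (Dp : forall x, tp - rho / 2 <= x <= tp + rho / 2 -> sg / 2 <= Derive ft x).
  { intros x Hx. assert (A : Rabs (Derive ft x - sg) <= sg / 2).
    { apply Dgen; [lra| rewrite Rabs_pos_eq; lra|].
      intros y z Hy Hz Hyx Hzx. apply Rabs_le_between in Hyx. apply Rabs_le_between in Hzx. unfold w in *.
      rewrite (Lp y), (Lp z) by (try apply Rabs_le_between; lra). ring. }
    apply Rabs_le_between in A. lra. }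
  assert (Vp1 : ft (tp - rho / 2) < kappa).
  { assert (A := Fapp (tp - rho / 2) ltac:(lra)). assert (B := M2 (tp - rho / 2) ltac:(lra)).
    apply Rabs_le_between in A. unfold eps in *. lra. }
  assert (Vp2 : kappa < ft (tp + rho / 2)).
  { assert (A := Fapp (tp + rho / 2) ltac:(lra)). assert (B := Lp (tp + rho / 2) ltac:(lra) ltac:(apply Rabs_le_between; lra)).
    apply Rabs_le_between in A. unfold eps, mu in *. lra. }
  assert (Vm1 : kappa < ft (tm - rho / 2)).
  { assert (A := Fapp (tm - rho / 2) ltac:(lra)). assert (B := Lm (tm - rho / 2) ltac:(lra) ltac:(apply Rabs_le_between; lra)).
    apply Rabs_le_between in A. unfold eps, mu in *. lra. }
  assert (Vm2 : ft (tm + rho / 2) < kappa).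
  { assert (A := Fapp (tm + rho / 2) ltac:(lra)). assert (B := M2 (tm + rho / 2) ltac:(lra)).
    apply Rabs_le_between in A. unfold eps in *. lra. }
  destruct (IVT (fun x => 1 * ft x + - kappa) (tp - rho / 2) (tp + rho / 2)) as [psip [Hpsip Epsip]].
  { apply cont_affine; auto. }
  { lra. } { lra. } { lra. }
  destruct (IVT (fun x => (-1) * ft x + kappa) (tm - rho / 2) (tm + rho / 2)) as [psim [Hpsim Epsim]].
  { apply cont_affine; auto. }
  { lra. } { lra. } { lra. }
  assert (Fpp : ft psip = kappa) by lra.
  assert (Fpm : ft psim = kappa) by lra.
  exists ft, psim, psip.
  assert (I1 : forall z, phim < z < phip -> ft z - ft phip < 0).
  { intros z Hz. rewrite Fb.
    destruct (Rle_or_lt z (phim + rho / 2)).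
    - assert (ft z < ft phim); [|lra].
      apply strict_decr; auto; [lra|]. intros x Hx. pose proof (Da x ltac:(lra)). lra.
    - destruct (Rle_or_lt (phip - rho / 2) z).
      + assert (ft z < ft phip); [|lra].
        apply strict_incr; auto; [lra|]. intros x Hx. pose proof (Db x ltac:(lra)). lra.
      + assert (A := Fapp z ltac:(lra)). assert (B := M1 z ltac:(lra)).
        apply Rabs_le_between in A. unfold eps in *. lra. }
  assert (I2 : forall z, psim < z < psip -> ft z - ft psip < 0).
  { intros z Hz. rewrite Fpp.
    destruct (Rle_or_lt z (tm + rho / 2)).
    - assert (ft z < ft psim); [|lra].
      apply strict_decr; auto; [lra|]. intros x Hx. pose proof (Dm x ltac:(lra)). lra.
    - destruct (Rle_or_lt (tp - rho / 2) z).
      + assert (ft z < ft psip); [|lra].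
        apply strict_incr; auto; [lra|]. intros x Hx. pose proof (Dp x ltac:(lra)). lra.
      + assert (A := Fapp z ltac:(lra)). assert (B := M2 z ltac:(lra)).
        apply Rabs_le_between in A. unfold eps in *. lra. }
  assert (I3 : forall z, phim <= z <= phip -> Rabs (f z - ft z) < delta /\ Rabs (Derive ft z) < sg + 1).
  { intros z Hz. split.
    - assert (A := Fapp z Hz). assert (B := Gtube z Hz). apply Rabs_le_between in A.
      apply Rabs_lt_between. unfold eps, mu, tau in *. lra.
    - pose proof (Fdb z Hz). lra. }
  assert (E1 : Derive ft phip <> 0) by (pose proof (Db phip ltac:(lra)); lra).
  assert (E2 : Derive ft phim <> 0) by (pose proof (Da phim ltac:(lra)); lra).
  assert (E3 : Derive ft psip <> 0) by (pose proof (Dp psip ltac:(lra)); lra).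
  assert (E4 : Derive ft psim <> 0) by (pose proof (Dm psim ltac:(lra)); lra).
  repeat split; auto; try lra.
  all: destruct (I3 z) as [? ?]; auto.
Qed.
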